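(* Fix $\alpha\in(0,1)$ and $\nu\in(0,\alpha)$, and let $y\sim P_\mu$. (i) (Inference on the winner.) Let $\hat\gamma=\arg\max_{\gamma\in[m]}y_\gamma$ (ties broken by any rule) and $\widehat\Gamma^+_\nu=\{\gamma\in[m]: y_\gamma\ge y_{\hat\gamma}-4q^{\nu}([m])\}$. Then $$P_\mu\left\{\mu_{\hat\gamma}\in\left(y_{\hat\gamma}\pm q^{(\alpha-\nu)}(\widehat\Gamma^+_\nu)\right)\right\}\ge1-\alpha.$$ (ii) (File-drawer problem.) For a fixed threshold $T\in\mathbb R$ let $\widehat\Gamma=\{\gamma\in[m]:y_\gamma\ge T\}$ and $\widehat\Gamma^+_\nu=\{\gamma\in[m]: y_\gamma\ge T-2q^\nu([m])\}$. Then $$P_\mu\left\{\mu_\gamma\in\left(y_\gamma\pm q^{(\alpha-\nu)}(\widehat\Gamma^+_\nu)\right),\ \forall\gamma\in\widehat\Gamma\right\}\ge1-\alpha.$$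
   Context: $\{P_\mu\}_{\mu\in\mathbb R^m}$ is a location family: $y=(y_1,\dots,y_m)\sim P_\mu$ means $y=\mu+Z$ with $Z=(Z_1,\dots,Z_m)\sim P_0$, where the $Z_i$ share a common marginal distribution that is symmetric with mean zero (the $Z_i$ need not be independent). For an index set $\mathcal I\subseteq[m]$ and $\beta\in(0,1)$, $$q^{\beta}(\mathcal I)=\inf\left\{q: P_0\left\{\max_{i\in\mathcal I}|Z_i|\le q\right\}\ge1-\beta\right\},$$ and for a data-dependent set $\widehat\Gamma^+_\nu$ the quantity $q^{(\alpha-\nu)}(\widehat\Gamma^+_\nu)$ is this function evaluated at the realized set. *)

(* Defs.v *)
From HB Require Import structures.
From mathcomp Require Import all_boot all_order all_algebra.
From mathcomp Require Import all_classical all_reals all_analysis.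
Set Implicit Arguments. Unset Strict Implicit. Unset Printing Implicit Defensive.
Import Order.TTheory GRing.Theory Num.Theory.
Local Open Scope classical_set_scope.
Local Open Scope ring_scope.

Definition maxabs (T : Type) (R : realType) (m : nat)
    (Z : T -> 'I_m -> R) (I : {set 'I_m}) (w : T) : R :=
  \big[Num.max/0]_(i in I) `|Z w i|.

Definition qtl (d : measure_display) (T : measurableType d) (R : realType)
    (P : probability T R) (m : nat) (Z : T -> 'I_m -> R)
    (beta : R) (I : {set 'I_m}) : R :=
  inf [set q : R | ((1 - beta)%:E <= P [set w | (maxabs Z I w <= q)%R])%E].

Definition noise_ok (d : measure_display) (T : measurableType d) (R : realType)
    (P : probability T R) (m : nat) (Z : T -> 'I_m -> R) : Prop :=
  [/\ (forall i, measurable_fun setT (fun w => Z w i)),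
      (forall i j (A : set R), measurable A ->
          P [set w | Z w i \in A] = P [set w | Z w j \in A]),
      (forall i (A : set R), measurable A ->
          P [set w | Z w i \in A] = P [set w | - Z w i \in A]),
      (forall i, P.-integrable setT (fun w => (Z w i)%:E)) &
      (forall i, (\int[P]_w (Z w i)%:E = 0)%E)].

(* Main.v *)
Require Import Defs.
From HB Require Import structures.
From mathcomp Require Import all_boot all_order all_algebra.
From mathcomp Require Import all_classical all_reals all_analysis.
From mathcomp Require Import measurable_realfun lra.
Import Order.TTheory GRing.Theory Num.Theory.
Local Open Scope classical_set_scope.
Local Open Scope ring_scope.

Section Gen.
Context d (T : measurableType d) (R : realType) (P : probability T R).

Lemma PI_ge (A B : set T) (a b : R) : measurable A -> measurable B ->
  (a%:E <= P A)%E -> (b%:E <= P B)%E -> ((a + b - 1)%:E <= P (A `&` B))%E.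
Proof.
move=> mA mB hA hB.
have mI : measurable (A `&` B) by exact: measurableI.
have hC : (P (~` (A `&` B)) <= P (~` A) + P (~` B))%E.
  by rewrite setCI; apply: measureU2; exact: measurableC.
move: hC hA hB; rewrite !probability_setC //.
rewrite -[P A]fineK ?fin_num_measure// -[P B]fineK ?fin_num_measure//.
rewrite -[P (A `&` B)]fineK ?fin_num_measure//.
rewrite -!EFinB -EFinD !lee_fin => h1 h2 h3. lra.
Qed.

Lemma mle (f g : T -> R) : measurable_fun setT f -> measurable_fun setT g ->
  measurable [set w | f w <= g w].
Proof.
move=> mf mg.
have := measurable_realfun.measurable_fun_ler mf mg measurableT (Y:=[set true]) I.
by rewrite setTI; congr measurable; apply/seteqP; split => w /=.
Qed.

Lemma fiber_meas (K : finType) (h : T -> K) (A : K -> set T) :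
  (forall k, measurable [set w | h w = k]) -> (forall k, measurable (A k)) ->
  measurable [set w | A (h w) w].
Proof.
move=> mh mA.
have -> : [set w | A (h w) w] = \bigcup_(k in [set: K]) ([set w | h w = k] `&` A k).
  apply/seteqP; split => w /=.
    by move=> hw; exists (h w) => //.
  by move=> [k _ [/= <-]].
apply: fin_bigcup_measurable; first exact: finite_finset.
by move=> k _; apply: measurableI.
Qed.

Lemma finset_meas (m : nat) (p : T -> 'I_m -> bool) (J : {set 'I_m}) :
  (forall g, measurable [set w | p w g]) ->
  measurable [set w | finset (p w) = J].
Proof.
move=> mp.
have -> : [set w | finset (p w) = J] =
   \bigcap_(g in [set: 'I_m]) [set w | p w g = (g \in J)].
  apply/seteqP; split => w /=.
    by move=> <- g _ /=; rewrite inE.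
  by move=> h; apply/setP => g; rewrite inE; exact: h.
apply: fin_bigcap_measurable; first exact: finite_finset.
move=> g _; case: (g \in J).
  by congr measurable: (mp g); apply/seteqP; split => w /=; case: (p w g).
have := measurableC (mp g); congr measurable; apply/seteqP; split => w /=;
  by case: (p w g).
Qed.

Section Q.
Context (f : T -> R) (mf : measurable_fun setT f).
Let mf_mixin := isMeasurableFun.Build _ _ _ _ _ mf.
Let X : {RV P >-> R} := MeasurableFun.Pack (MeasurableFun.Class mf_mixin).
Let cdfE r : cdf X r = P [set w | f w <= r].
Proof. rewrite /cdf /distribution /pushforward /=. congr (P _). Qed.

Lemma qattain (beta : R) : 0 < beta < 1 -> (forall w, 0 <= f w) ->
  let S := [set q | ((1 - beta)%:E <= P [set w | (f w <= q)%R])%E] in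
  S (inf S) /\ (forall q, S q -> 0 <= q).
Proof.
move=> /andP[b0 b1] f0 S.
have lb : forall q, S q -> 0 <= q.
  move=> q Sq; rewrite leNgt; apply/negP => q0; move: Sq; rewrite /S /=.
  have -> : [set w | f w <= q] = set0.
    by apply/seteqP; split => w //= fw; have := f0 w; lra.
  by rewrite measure0 lee_fin; lra.
split => //.
have ne : S !=set0.
  apply: contrapT => S0.
  have h : forall r, (cdf X r < (1 - beta)%:E)%E.
    move=> r; rewrite ltNge; apply/negP => hr.
    by apply: S0; exists r; rewrite /S /= -cdfE.
  have : (1 <= (1 - beta)%:E)%E.
    apply: (cvge_to_le (cvg_cdfy1 X)).
    by apply: nearW => r; exact: ltW (h r).
  by rewrite lee_fin; lra.
have hcont := @cdf_right_continuous _ _ _ P X (inf S).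
rewrite /S /= -cdfE.
apply: (cvge_to_ge hcont).
near=> r.
have hr : inf S < r by near: r; exact: nbhs_right_gt.
have [s Ss sr] := inf_lt ne hr.
apply: (le_trans Ss); rewrite -cdfE; apply: cdf_nondecreasing; exact: ltW.
Unshelve. all: by end_near.
Qed.
End Q.
End Gen.
Arguments PI_ge {d T R P A B a b}.
Arguments fiber_meas {d T K}.
Arguments finset_meas {d T m}.

Section MA.
Context (T : Type) (R : realType) (m : nat) (Z : T -> 'I_m -> R).

Lemma maxabs_ge0 (I : {set _}) w : 0 <= maxabs Z I w.
Proof. rewrite /maxabs; apply: (big_ind (fun x => 0 <= x)) => // x y hx hy; by rewrite le_max hx. Qed.

Lemma maxabs_term (I : {set _}) w i : i \in I -> `|Z w i| <= maxabs Z I w.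
Proof. by move=> iI; rewrite /maxabs (bigD1 i) //= le_max lexx. Qed.

Lemma maxabs_sub (I J : {set _}) w : I \subset J -> maxabs Z I w <= maxabs Z J w.
Proof.
move=> /fintype.subsetP IJ; rewrite {1}/maxabs; apply: (big_ind (fun x => x <= maxabs Z J w)).
- exact: maxabs_ge0.
- by move=> x y hx hy; rewrite ge_max hx hy.
- by move=> i /IJ; exact: maxabs_term.
Qed.
End MA.
Arguments maxabs_ge0 {T R m} Z I w.
Arguments maxabs_term {T R m} Z {I} w {i}.
Arguments maxabs_sub {T R m} Z {I J} w.


Section Main.
Context d (T : measurableType d) (R : realType) (P : probability T R)
  (m : nat) (Z : T -> 'I_m -> R) (mZ : forall i, measurable_fun setT (fun w => Z w i)).

Lemma maxabs_meas (I : {set _}) : measurable_fun setT (maxabs Z I).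
Proof.
rewrite /maxabs.
elim: (index_enum _) => [|i s IH].
  by under eq_fun do rewrite big_nil; exact: measurable_cst.
under eq_fun do rewrite big_cons.
case: (i \in I) => //.
apply: measurable_realfun.measurable_maxr => //.
apply: measurableT_comp; [exact: measurable_realfun.normr_measurable | exact: mZ].
Qed.

Lemma qtl_attain beta (I : {set 'I_m}) : 0 < beta < 1 ->
  ((1 - beta)%:E <= P [set w | (maxabs Z I w <= qtl P Z beta I)%R])%E.
Proof.
move=> hb.
have [h _] := @qattain _ _ _ P _ (maxabs_meas I) beta hb (maxabs_ge0 Z I).
exact: h.
Qed.

Lemma qtl_mono beta (I J : {set 'I_m}) : 0 < beta < 1 -> I \subset J ->
  qtl P Z beta I <= qtl P Z beta J.
Proof.
move=> hb IJ.
have [_ lb] := @qattain _ _ _ P _ (maxabs_meas I) beta hb (maxabs_ge0 Z I).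
apply: ge_inf; first by exists 0 => q Sq; exact: lb.
rewrite /=; apply: (le_trans (qtl_attain beta J hb)).
apply: le_measure; rewrite ?inE.
- by apply: mle; [exact: maxabs_meas | exact: measurable_cst].
- by apply: mle; [exact: maxabs_meas | exact: measurable_cst].
- by move=> w /= h; exact: le_trans (maxabs_sub Z w IJ) h.
Qed.

End Main.

Theorem theorem2 (d : measure_display) (T : measurableType d) (R : realType)
    (P : probability T R) (m : nat) (Z : T -> 'I_m -> R) (mu : 'I_m -> R)
    (alpha nu : R) :
  noise_ok P Z -> 0 < alpha < 1 -> 0 < nu < alpha ->
  let y := fun w i => mu i + Z w i in
  (* (i) inference on the winner, for any measurable tie-breaking argmax *)
  (forall ghat : T -> 'I_m,
     (forall i, measurable [set w | ghat w = i]) ->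
     (forall w i, y w i <= y w (ghat w)) ->
     let Gp := fun w => finset (fun g : 'I_m =>
                 (y w (ghat w) - 4 * qtl P Z nu [set: 'I_m] <= y w g)%R) in
     ((1 - alpha)%:E <=
        P [set w | (`|mu (ghat w) - y w (ghat w)|
                     <= qtl P Z (alpha - nu) (Gp w))%R])%E)
  /\
  (* (ii) file-drawer problem *)
  (forall Thr : R,
     let G := fun w => finset (fun g : 'I_m => (Thr <= y w g)%R) in
     let Gp := fun w => finset (fun g : 'I_m =>
                 (Thr - 2 * qtl P Z nu [set: 'I_m] <= y w g)%R) in
     ((1 - alpha)%:E <=
        P [set w | forall g, g \in G w ->
                 (`|mu g - y w g| <= qtl P Z (alpha - nu) (Gp w))%R])%E).
Proof.
move=> [mZ _ _ _ _] /andP[a0 a1] /andP[n0 na] y.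
have hnu : 0 < nu < 1 by apply/andP; split; lra.
have han : 0 < alpha - nu < 1 by apply/andP; split; lra.
set c := qtl P Z nu [set: 'I_m].
have my : forall i, measurable_fun setT (fun w => y w i).
  by move=> i; apply: measurable_funD; [exact: measurable_cst | exact: mZ].
have mdev : forall i, measurable_fun setT (fun w => `|mu i - y w i|).
  move=> i; apply: measurableT_comp; first exact: measurable_realfun.normr_measurable.
  by apply: measurable_funB; [exact: measurable_cst | exact: my].
set E := [set w | (maxabs Z [set: 'I_m] w <= c)%R].
have mE : measurable E by apply: mle; [exact: maxabs_meas | exact: measurable_cst].
have hE : ((1 - nu)%:E <= P E)%E by exact: qtl_attain.
have Zb : forall w, E w -> forall i, - c <= Z w i <= c.
  move=> w Ew i; rewrite -ler_norml.
  exact: le_trans (maxabs_term Z w (finset.in_setT i)) Ew.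
have final : forall (B Tg : set T), measurable B -> measurable Tg ->
    ((1 - (alpha - nu))%:E <= P B)%E -> E `&` B `<=` Tg -> ((1 - alpha)%:E <= P Tg)%E.
  move=> B Tg mB mTg hB sub.
  have hle : (P (E `&` B) <= P Tg)%E.
    by apply: le_measure => //; rewrite inE //; exact: measurableI.
  apply: (le_trans _ hle); apply: (le_trans _ (PI_ge mE mB hE hB)); rewrite lee_fin; lra.
split.
- move=> ghat hg hmax; cbv zeta.
  pose Gp := fun w => finset (fun g : 'I_m =>
                 (y w (ghat w) - 4 * c <= y w g)%R).
  change ((1 - alpha)%:E <= P [set w | (`|mu (ghat w) - y w (ghat w)|
                     <= qtl P Z (alpha - nu) (Gp w))%R])%E.
  set Gs := finset (fun g => [forall dl, mu dl - 2 * c <= mu g]).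
  set B := [set w | (maxabs Z Gs w <= qtl P Z (alpha - nu) Gs)%R].
  apply: (final B).
  + by apply: mle; [exact: maxabs_meas | exact: measurable_cst].
  + pose A := fun k : 'I_m * {set 'I_m} =>
      [set w | `|mu k.1 - y w k.1| <= qtl P Z (alpha - nu) k.2].
    apply: (fiber_meas (fun w => (ghat w, Gp w)) A).
      move=> [i J].
      have -> : [set w | (ghat w, Gp w) = (i, J)] = [set w | ghat w = i] `&`
          [set w | finset (fun g => y w i - 4 * c <= y w g) = J].
        apply/seteqP; split => w /=.
          by case=> <- <-.
        by case=> hi hJ; rewrite /Gp hi hJ.
      apply: measurableI => //; apply: finset_meas => g.
      apply: mle => //; apply: measurable_funB => //; exact: measurable_cst.
    by move=> [i J]; apply: mle => //; exact: measurable_cst.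
  + exact: qtl_attain.
  + move=> w [Ew Bw] /=.
    have gin : ghat w \in Gs.
      rewrite inE; apply/forallP => dl.
      have := hmax w dl; have := Zb w Ew dl; have := Zb w Ew (ghat w); rewrite /y.
      move=> /andP[? ?] /andP[? ?]; lra.
    have sub : Gs \subset Gp w.
      apply/fintype.subsetP => g; rewrite !inE => /forallP /(_ (ghat w)) h.
      have := Zb w Ew g; have := Zb w Ew (ghat w); rewrite /y.
      move=> /andP[? ?] /andP[? ?]; lra.
    have -> : mu (ghat w) - y w (ghat w) = - Z w (ghat w) by rewrite /y; lra.
    rewrite normrN.
    apply: le_trans (maxabs_term Z w gin) _.
    apply: le_trans Bw _; exact: qtl_mono.
- move=> Thr; cbv zeta.
  pose G := fun w => finset (fun g : 'I_m => (Thr <= y w g)%R).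
  pose Gp := fun w => finset (fun g : 'I_m => (Thr - 2 * c <= y w g)%R).
  change ((1 - alpha)%:E <= P [set w | forall g, g \in G w ->
                 (`|mu g - y w g| <= qtl P Z (alpha - nu) (Gp w))%R])%E.
  set Gs := finset (fun g => Thr - c <= mu g).
  set B := [set w | (maxabs Z Gs w <= qtl P Z (alpha - nu) Gs)%R].
  apply: (final B).
  + by apply: mle; [exact: maxabs_meas | exact: measurable_cst].
  + pose A := fun J : {set 'I_m} => [set w | forall g, g \in G w ->
                 (`|mu g - y w g| <= qtl P Z (alpha - nu) J)%R].
    apply: (fiber_meas Gp A).
      by move=> J; apply: finset_meas => g; apply: mle => //; exact: measurable_cst.
    move=> J.
    have -> : A J = \bigcap_(g in [set: 'I_m])
        (~` [set w | Thr <= y w g] `|` [set w | `|mu g - y w g| <= qtl P Z (alpha - nu) J]).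
      apply/seteqP; split => w /=.
        move=> h g _ /=; case: (boolP (Thr <= y w g)) => hg.
          by right; apply: h; rewrite inE.
        by left; exact/negP.
      move=> h g; rewrite inE => hg.
      by case: (h g I) => //=.
    apply: fin_bigcap_measurable; first exact: finite_finset.
    move=> g _; apply: measurableU.
      by apply: measurableC; apply: mle => //; exact: measurable_cst.
    by apply: mle => //; exact: measurable_cst.
  + exact: qtl_attain.
  + move=> w [Ew Bw] /= g.
    rewrite inE => hg.
    have gin : g \in Gs.
      by rewrite inE; move: hg; have := Zb w Ew g; rewrite /y => /andP[? ?] ?; lra.
    have sub : Gs \subset Gp w.
      apply/fintype.subsetP => k; rewrite !inE => h.
      by have := Zb w Ew k; rewrite /y => /andP[? ?]; lra.
    have -> : mu g - y w g = - Z w g by rewrite /y; lra.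
    rewrite normrN.
    apply: le_trans (maxabs_term Z w gin) _.
    apply: le_trans Bw _; exact: qtl_mono.
Qed.
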